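(* Let $H\in\mathbb{R}^{n\times n}$ be symmetric with $\lambda_1:=\lambda_{\min}(H)<0$ and unit eigenvector $v_1$, and let $g\in\mathbb{R}^n$ with $g^{(1)}:=g^\intercal v_1\neq 0$. For $a\in\mathbb{R}^n$ write $a^{(1)}=a^\intercal v_1$. Let $\eta>0$ and $z_0=-\alpha\frac{g}{\|g\|}$ with $0<\alpha<1$, and consider the phase I iteration $z_{t+1}=z_t-\eta(Hz_t+g)$ of Algorithm 1. Then phase I terminates, i.e. there is an index $T_1\ge 0$ with $\|z_t\|<1$ for all $t\le T_1$ and $\|z_{T_1+1}\|\ge 1$, and $$T_1\le \frac{1}{\log(1-\eta\lambda_1)}\Big[\log\Big(\frac{1}{\eta|g^{(1)}|}-\frac{1}{\eta\lambda_1}\Big)-\log\Big(\frac{-z_0^{(1)}}{\eta g^{(1)}}-\frac{1}{\eta\lambda_1}\Big)\Big].$$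
   Context: Algorithm 1 solves $\min_{\|z\|_2\le1}\frac12 z^\intercal Hz+g^\intercal z$; its phase I starts from $z_0$ and performs plain gradient steps $z_{t+1}=z_t-\eta(Hz_t+g)$ while $\|z_t\|<1$; $T_1$ denotes the number of phase I iterations as specified in the claim. *)

(* Defs.v *)
From HB Require Import structures.
From mathcomp Require Import all_boot all_order all_algebra.
From mathcomp Require Import all_classical all_reals all_analysis.
Set Implicit Arguments. Unset Strict Implicit. Unset Printing Implicit Defensive.
Import Order.TTheory GRing.Theory Num.Theory.
Local Open Scope ring_scope.

Section Defs.
Variables (R : realType) (n : nat).

Definition dotv (u v : 'cV[R]_n) : R := \sum_(i < n) u i 0 * v i 0.
Definition norm2 (u : 'cV[R]_n) : R := Num.sqrt (dotv u u).

Definition is_eigenvalue (H : 'M[R]_n) (lam : R) : Prop :=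
  exists v : 'cV[R]_n, v != 0 /\ H *m v = lam *: v.

Definition is_lambda_min (H : 'M[R]_n) (lam : R) : Prop :=
  is_eigenvalue H lam /\ forall mu, is_eigenvalue H mu -> lam <= mu.

Fixpoint phase1 (H : 'M[R]_n) (g : 'cV[R]_n) (eta : R) (z0 : 'cV[R]_n)
    (t : nat) : 'cV[R]_n :=
  match t with
  | 0%N => z0
  | t'.+1 => let z := phase1 H g eta z0 t' in z - eta *: (H *m z + g)
  end.
End Defs.

(* Main.v *)
Require Import Defs.
From HB Require Import structures.
From mathcomp Require Import all_boot all_order all_algebra.
From mathcomp Require Import all_classical all_reals all_analysis.
From mathcomp Require Import ring lra.
Import Order.TTheory GRing.Theory Num.Theory.
Set Implicit Arguments. Unset Strict Implicit.
Local Open Scope ring_scope.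

Section Aux.
Variables (R : realType) (n : nat).
Implicit Types (u v w : 'cV[R]_n).

Lemma dotvE u v : dotv u v = (u^T *m v) 0 0.
Proof. by rewrite /dotv mxE; apply: eq_bigr => i _; rewrite mxE. Qed.

Lemma dotvB u w v : dotv (u - w) v = dotv u v - dotv w v.
Proof. by rewrite /dotv -sumrB; apply: eq_bigr => i _; rewrite !mxE mulrBl. Qed.

Lemma dotvBr u w v : dotv v (u - w) = dotv v u - dotv v w.
Proof. by rewrite /dotv -sumrB; apply: eq_bigr => i _; rewrite !mxE mulrBr. Qed.

Lemma dotvD u w v : dotv (u + w) v = dotv u v + dotv w v.
Proof. by rewrite /dotv -big_split; apply: eq_bigr => i _; rewrite !mxE mulrDl. Qed.

Lemma dotvZ k u v : dotv (k *: u) v = k * dotv u v.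
Proof. by rewrite /dotv mulr_sumr; apply: eq_bigr => i _; rewrite !mxE mulrA. Qed.

Lemma dotvC u v : dotv u v = dotv v u.
Proof. by apply: eq_bigr => i _; rewrite mulrC. Qed.

Lemma dotv_ge0 u : 0 <= dotv u u.
Proof. by apply: sumr_ge0 => i _; rewrite -expr2 sqr_ge0. Qed.

Lemma dotv_sq u v : dotv v v = 1 -> (dotv u v) ^+ 2 <= dotv u u.
Proof.
move=> hv; set a := dotv u v.
have := dotv_ge0 (u - a *: v).
have Zr k (x y : 'cV[R]_n) : dotv x (k *: y) = k * dotv x y by rewrite dotvC dotvZ dotvC.
rewrite dotvB !dotvBr !dotvZ !Zr (dotvC v u) hv -/a => h; nra.
Qed.

Lemma abs_le_norm u v : norm2 v = 1 -> `|dotv u v| <= norm2 u.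
Proof.
move=> hv.
have hv' : dotv v v = 1.
  by move: hv; rewrite /norm2 => h; rewrite -(sqr_sqrtr (dotv_ge0 v)) h expr1n.
rewrite /norm2 -sqrtr_sqr; apply: ler_wsqrtr; exact: dotv_sq.
Qed.

Lemma bern (d : R) (t : nat) : 0 <= d -> 1 + t%:R * d <= (1 + d) ^+ t.
Proof.
move=> d0; elim: t => [|t IH]; first by rewrite mul0r addr0 expr0.
rewrite exprS -natr1.
have h1 : 0 <= (1 + d) ^+ t by apply: exprn_ge0; lra.
have : (1 + d) * (1 + t%:R * d) <= (1 + d) * (1 + d) ^+ t by apply: ler_wpM2l => //; lra.
have : 0 <= t%:R * d * d by apply: mulr_ge0 => //; apply: mulr_ge0.
lra.
Qed.

End Aux.

Theorem lemma2 (R : realType) (n : nat) (H : 'M[R]_n) (g v1 : 'cV[R]_n)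
    (lam1 eta alpha : R) :
  H^T = H ->
  is_lambda_min H lam1 -> lam1 < 0 ->
  H *m v1 = lam1 *: v1 -> norm2 v1 = 1 ->
  dotv g v1 != 0 ->
  0 < eta -> 0 < alpha -> alpha < 1 ->
  let z0 := (- (alpha / norm2 g)) *: g in
  let z := phase1 H g eta z0 in
  let g1 := dotv g v1 in
  exists T1 : nat,
    (forall t : nat, (t <= T1)%N -> norm2 (z t) < 1) /\
    1 <= norm2 (z T1.+1) /\
    T1%:R <= (ln (1 - eta * lam1))^-1 *
      (ln ((eta * `|g1|)^-1 - (eta * lam1)^-1)
       - ln (- dotv z0 v1 / (eta * g1) - (eta * lam1)^-1)).
Proof.
move=> HT _ lam0 Hv1 nv1 g1n0 eta0 al0 al1 z0 z g1.
have g1ne : g1 != 0 by [].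
have ag1 : 0 < `|g1| by rewrite normr_gt0.
have ng : 0 < norm2 g.
  exact: (lt_le_trans ag1 (abs_le_norm g nv1)).
set q := 1 - eta * lam1.
have el : eta * lam1 < 0 by rewrite pmulr_rlt0.
have q1 : 1 < q by rewrite /q; lra.
set c := alpha / norm2 g - lam1^-1.
have ilam : lam1^-1 < 0 by rewrite invr_lt0.
have an0 : 0 < alpha / norm2 g by apply: divr_gt0.
have c0 : 0 < c by rewrite /c; lra.
have lam1n0 : lam1 != 0 by rewrite lt_eqF.
have step t : dotv (z t.+1) v1 = q * dotv (z t) v1 - eta * g1.
  have -> : z t.+1 = z t - eta *: (H *m z t + g) by [].
  rewrite dotvB dotvZ dotvD.
  have -> : dotv (H *m z t) v1 = lam1 * dotv (z t) v1.
    by rewrite !dotvE trmx_mul -mulmxA HT Hv1 -scalemxAr mxE.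
  rewrite /q -/g1; ring.
have a0 : dotv (z 0%N) v1 = - (alpha / norm2 g) * g1 by rewrite /= /z0 dotvZ.
have formA t : dotv (z t) v1 = - g1 * (q ^+ t * c + lam1^-1).
  elim: t => [|t IH]; first by rewrite a0 expr0 mul1r /c; ring.
  rewrite step IH exprS /q /c; by field; rewrite lam1n0 gt_eqF.
have pos (s : nat) : 0 < q ^+ s * c + lam1^-1.
  have : 1 <= q ^+ s by apply: exprn_ege1; lra.
  move=> h; have : c <= q ^+ s * c by rewrite ler_peMl // ltW.
  rewrite /c; lra.
have absf (s : nat) : `|dotv (z s) v1| = `|g1| * (q ^+ s * c + lam1^-1).
  by rewrite formA normrM normrN (gtr0_norm (pos s)).
have nz0 : norm2 (z 0%N) = alpha.
  rewrite /= /z0 /norm2 dotvZ dotvC dotvZ mulrA -expr2 sqrtrM ?sqr_ge0 //.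
  rewrite sqrtr_sqr normrN gtr0_norm // -/(norm2 g); field; exact: lt0r_neq0.
set X := `|g1|^-1 - lam1^-1.
have X0 : 0 < X.
  have hi : 0 < `|g1|^-1 by rewrite invr_gt0.
  rewrite /X; lra.
have h3g : `|g1| * X = 1 - `|g1| * lam1^-1 by rewrite /X mulrBr mulfV ?lt0r_neq0.
set d := - (eta * lam1).
have d0 : 0 < d by rewrite /d; lra.
set K := X / (d * c).
have K0 : 0 <= K by apply: divr_ge0; [lra | apply: mulr_ge0; lra].
have exP : exists t, 1 <= norm2 (z t).
  exists (Num.Def.archi_bound K).
  set t := Num.Def.archi_bound K.
  have hK := archi_boundP K0; rewrite -/t in hK.
  apply: le_trans (abs_le_norm _ nv1); rewrite absf.
  have hb := bern t (ltW d0).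
  have qd : 1 + d = q by rewrite /d /q; ring.
  rewrite qd in hb.
  have : X <= t%:R * (d * c).
    by rewrite -ler_pdivrMr ?mulr_gt0 // ltW.
  move=> hX.
  have : (1 + t%:R * d) * c <= q ^+ t * c by rewrite ler_pM2r.
  move=> h2.
  have h3 : `|g1| * X = 1 - `|g1| * lam1^-1 by rewrite /X mulrBr mulfV ?lt0r_neq0.
  have e4 : (1 + t%:R * d) * c = c + t%:R * (d * c) by ring.
  have hXq : X <= q ^+ t * c.
    apply: (le_trans hX); apply: le_trans h2; rewrite e4 lerDr; exact: ltW.
  have e5 : 1 = `|g1| * X + `|g1| * lam1^-1 by rewrite h3 subrK.
  by rewrite mulrDr [leLHS]e5 lerD2r ler_pM2l.
pose m := ex_minn exP.
have hm : 1 <= norm2 (z m) by rewrite /m; case: ex_minnP.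
have hmin t : (t < m)%N -> norm2 (z t) < 1.
  move=> ht; rewrite ltNge; apply/negP => h.
  have : (m <= t)%N by rewrite /m; case: ex_minnP => k _ /(_ t h).
  by rewrite leqNgt ht.
have m0 : (0 < m)%N.
  rewrite lt0n; apply/negP => /eqP e; move: hm; rewrite e nz0; lra.
exists m.-1; split.
  by move=> t ht; apply: hmin; rewrite (leq_ltn_trans ht) // prednK.
split; first by rewrite prednK.
set T := m.-1.
have hT : norm2 (z T) < 1 by apply: hmin; rewrite /T prednK.
have hlt : q ^+ T * c < X.
  have := le_lt_trans (abs_le_norm _ nv1) hT; rewrite absf => h.
  have : `|g1| * (q ^+ T * c) < `|g1| * X.
    by rewrite h3g ltrBrDr -mulrDr.
  by rewrite ltr_pM2l.
have eA : (eta * `|g1|)^-1 - (eta * lam1)^-1 = X / eta.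
  by rewrite /X; field; rewrite lam1n0 !gt_eqF.
have eB : - dotv z0 v1 / (eta * g1) - (eta * lam1)^-1 = c / eta.
  rewrite /z0 dotvZ -/g1 /c; by field; rewrite lam1n0 g1ne !gt_eqF.
rewrite eA eB.
have lq : 0 < ln q by apply: ln_gt0.
rewrite ler_pdivlMl //.
have q0 : 0 < q := lt_trans ltr01 q1.
have qT : 0 < q ^+ T by apply: exprn_gt0.
have e1 : ln (q ^+ T * (c / eta)) = ln q * T%:R + ln (c / eta).
  by rewrite [LHS]lnM ?posrE ?divr_gt0 // lnXn // mulr_natr.
have : ln (q ^+ T * (c / eta)) <= ln (X / eta).
  rewrite ler_ln ?posrE ?mulr_gt0 ?invr_gt0 //.
  by rewrite mulrA ler_pM2r ?invr_gt0 // ltW.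
rewrite e1 => hle.
by rewrite lerBrDr.
Qed.
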